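(* Let $T_1$ be a quadtree in $\mathbb{R}^d$ and $T^*$ its extended quadtree. Let $C_j$ be a cell of $T^*$ with brand $j$. Then every neighboring cell $N$ of $C_j$ with $|N|\ge 2^j|C_j|$ has brand at most $j+1$.
   Context: A quadtree on an axis-aligned root hypercube $R\subset\mathbb{R}^d$ is a hierarchical decomposition in which every node has an associated axis-aligned hypercube (cell) and is either a leaf or has $2^d$ equal-sized children whose cells subdivide its cell. The size $|C|$ of a cell is its edge length. Two cells are neighbors if they are interior-disjoint and share (part of) a $(d-1)$-dimensional facet. For an integer $j$, a cell $C$ is $2^j$-smooth if every leaf neighboring $C$ has size at most $2^j|C|$. Extended quadtree: the cells of $T_1$ get brand $1$. Recursively, for $j\ge1$, let $T^j$ be the quadtree formed by $\bigcup_{i\le j}T_i$, and let $T_{j+1}$ be the minimal set of cells obtained by splitting cells of $T^j$ such that every cell of $T_j$ is $2^j$-smooth in the resulting quadtree; the cells of $T_{j+1}$ get brand $j+1$. The extended quadtree is $T^*=T^{d+1}$. *)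

(* Defs.v *)
From HB Require Import structures.
From mathcomp Require Import all_boot all_order all_algebra.
From mathcomp Require Import classical_sets cardinality reals.
Set Implicit Arguments. Unset Strict Implicit. Unset Printing Implicit Defensive.
Import Order.TTheory GRing.Theory Num.Theory.
Local Open Scope classical_set_scope.
Local Open Scope ring_scope.

(* A cell of a quadtree on the root hypercube R = prod_i [a_i, a_i + s]:
   a dyadic subcube given by its depth [lvl] and integer position [idx]. *)
Record cell (d : nat) := Cell { lvl : nat; idx : 'I_d -> nat }.

Definition valid_cell d (c : cell d) : Prop := forall i, (idx c i < 2 ^ lvl c)%N.

Definition root_cell d : cell d := @Cell d 0 (fun _ => 0%N).

Definition is_child d (c p : cell d) : Prop :=
  lvl c = (lvl p).+1 /\ forall i, (idx c i %/ 2)%N = idx p i.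

Definition quadtree d (Q : set (cell d)) : Prop :=
  [/\ finite_set Q, Q (root_cell d), (forall c, Q c -> valid_cell c)
    & forall c p, Q c -> is_child c p -> Q p /\ forall c', is_child c' p -> Q c'].

Definition leaf d (Q : set (cell d)) (c : cell d) : Prop :=
  Q c /\ forall c', is_child c' c -> ~ Q c'.

Definition lo (R : realType) d (a : 'I_d -> R) (s : R) (c : cell d) (i : 'I_d) : R :=
  a i + s * (idx c i)%:R / (2 ^+ lvl c).

Definition csize (R : realType) d (s : R) (c : cell d) : R := s / (2 ^+ lvl c).

(* Neighbors: interior-disjoint axis-aligned cubes whose intersection is
   (d-1)-dimensional: they touch in exactly one coordinate i and their
   (open) projections overlap in every other coordinate. *)
Definition neighbor (R : realType) d (a : 'I_d -> R) (s : R) (c c' : cell d) : Prop :=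
  exists i : 'I_d,
    (lo a s c i + csize s c = lo a s c' i \/ lo a s c' i + csize s c' = lo a s c i) /\
    forall k : 'I_d, k != i ->
      Num.max (lo a s c k) (lo a s c' k) <
      Num.min (lo a s c k + csize s c) (lo a s c' k + csize s c').

Definition smooth (R : realType) d (a : 'I_d -> R) (s : R) (Q : set (cell d))
  (j : nat) (c : cell d) : Prop :=
  forall L, leaf Q L -> neighbor a s L c -> csize s L <= 2 ^+ j * csize s c.

Definition good_ext (R : realType) d (a : 'I_d -> R) (s : R)
  (U B : set (cell d)) (j : nat) (Q : set (cell d)) : Prop :=
  [/\ quadtree Q, U `<=` Q & forall c, B c -> smooth a s Q j c].

Definition min_ext (R : realType) d (a : 'I_d -> R) (s : R)
  (U B : set (cell d)) (j : nat) : set (cell d) :=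
  [set c | forall Q, good_ext a s U B j Q -> Q c].

(* ext n = (T^(n+1), T_(n+1)) *)
Fixpoint ext (R : realType) d (a : 'I_d -> R) (s : R) (T1 : set (cell d))
  (n : nat) : set (cell d) * set (cell d) :=
  match n with
  | 0 => (T1, T1)
  | n'.+1 =>
      let UB := ext a s T1 n' in
      let U' := min_ext a s UB.1 UB.2 n in   (* n = j with j = n'+1 *)
      (U', U' `\` UB.1)
  end.

Definition brand_set (R : realType) d (a : 'I_d -> R) (s : R) (T1 : set (cell d))
  (j : nat) : set (cell d) := (ext a s T1 j.-1).2.

Definition upto (R : realType) d (a : 'I_d -> R) (s : R) (T1 : set (cell d))
  (j : nat) : set (cell d) := (ext a s T1 j.-1).1.

Definition Tstar (R : realType) d (a : 'I_d -> R) (s : R) (T1 : set (cell d))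
  : set (cell d) := upto a s T1 d.+1.

(* Main.v *)
Require Import Defs.
From HB Require Import structures.
From mathcomp Require Import all_boot all_order all_algebra.
From mathcomp Require Import classical_sets cardinality reals.
From mathcomp Require Import boolp.
From mathcomp Require finmap.
From mathcomp Require Import zify ring lra.
Set Implicit Arguments. Unset Strict Implicit. Unset Printing Implicit Defensive.
Import Order.TTheory GRing.Theory Num.Theory.
Local Open Scope classical_set_scope.
Local Open Scope ring_scope.

Definition anc d (c : cell d) (m : nat) : cell d :=
  @Cell d m (fun k => (idx c k %/ 2 ^ (lvl c - m))%N).

Lemma anc_self d (c : cell d) : anc c (lvl c) = c.
Proof.
case: c => l f; rewrite /anc /=; congr Cell.
by apply: funext => k; rewrite subnn expn0 divn1.
Qed.

Lemma anc_child d (c : cell d) m : (m < lvl c)%N -> is_child (anc c m.+1) (anc c m).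
Proof.
move=> hm; split => //= i.
rewrite -divnMA -expnSr; congr (_ %/ 2 ^ _)%N; lia.
Qed.

Lemma lo_eq (R : realType) d (a : 'I_d -> R) (s : R) (c : cell d) k M :
  (lvl c <= M)%N ->
  lo a s c k = a k + (s / 2 ^+ M) * ((idx c k * 2 ^ (M - lvl c))%N)%:R.
Proof.
move=> hM; rewrite /lo; congr (_ + _).
have -> : (2 ^+ M : R) = 2 ^+ lvl c * 2 ^+ (M - lvl c) by rewrite -exprD subnKC.
rewrite natrM natrX.
have h1 : (2 ^+ lvl c : R) != 0 by apply: expf_neq0; rewrite pnatr_eq0.
have h2 : (2 ^+ (M - lvl c) : R) != 0 by apply: expf_neq0; rewrite pnatr_eq0.
field; by rewrite h1 h2.
Qed.

Lemma csize_eq (R : realType) d (s : R) (c : cell d) M :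
  (lvl c <= M)%N ->
  csize s c = (s / 2 ^+ M) * (2 ^ (M - lvl c))%:R.
Proof.
move=> hM; rewrite /csize.
have -> : (2 ^+ M : R) = 2 ^+ lvl c * 2 ^+ (M - lvl c) by rewrite -exprD subnKC.
rewrite natrX.
have h1 : (2 ^+ lvl c : R) != 0 by apply: expf_neq0; rewrite pnatr_eq0.
have h2 : (2 ^+ (M - lvl c) : R) != 0 by apply: expf_neq0; rewrite pnatr_eq0.
field; by rewrite h1 h2.
Qed.

Lemma ltR (R : realType) (t a : R) (x y : nat) : 0 < t ->
  (a + t * x%:R < a + t * y%:R) = (x < y)%N.
Proof. by move=> ht; rewrite ltrD2l ltr_pM2l // ltr_nat. Qed.

Lemma leR (R : realType) (t a : R) (x y : nat) : 0 < t ->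
  (a + t * x%:R <= a + t * y%:R) = (x <= y)%N.
Proof. by move=> ht; rewrite lerD2l ler_pM2l // ler_nat. Qed.

Lemma addR (R : realType) (t a : R) (x y : nat) :
  a + t * x%:R + t * y%:R = a + t * (x + y)%N%:R.
Proof. by rewrite -addrA -mulrDr -natrD. Qed.

Lemma tpos (R : realType) (s : R) M : 0 < s -> 0 < s / 2 ^+ M.
Proof. by move=> hs; rewrite divr_gt0 // exprn_gt0. Qed.

Lemma F1 (R : realType) d (a : 'I_d -> R) (s : R) (hs : 0 < s) (N : cell d) m k :
  (m <= lvl N)%N ->
  lo a s (anc N m) k <= lo a s N k /\
  lo a s N k + csize s N <= lo a s (anc N m) k + csize s (anc N m).
Proof.
move=> hm.
have hA : (lvl (anc N m) <= lvl N)%N by [].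
rewrite !(lo_eq _ _ _ (leqnn (lvl N))) !(lo_eq _ _ _ hA).
rewrite !(csize_eq _ (leqnn (lvl N))) !(csize_eq _ hA) !addR.
have ht := tpos (lvl N) hs.
rewrite !leR //= subnn !muln1 expn0; split.
  exact: leq_divM.
rewrite addn1 -mulSnr; apply: ltn_ceil; by rewrite expn_gt0.
Qed.

Lemma F2 (R : realType) d (a : 'I_d -> R) (s : R) (hs : 0 < s) (C L : cell d) :
  (lvl L < lvl C)%N ->
  (forall k, lo a s C k < lo a s L k + csize s L /\ lo a s L k < lo a s C k + csize s C) ->
  forall k, (idx C k %/ 2 ^ (lvl C - lvl L))%N = idx L k.
Proof.
move=> hl hov k; have [h1 h2] := hov k.
have hA : (lvl L <= lvl C)%N by apply: ltnW.
move: h1 h2.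
rewrite !(lo_eq _ _ _ (leqnn (lvl C))) !(lo_eq _ _ _ hA).
rewrite !(csize_eq _ (leqnn (lvl C))) !(csize_eq _ hA) !addR.
have ht := tpos (lvl C) hs.
rewrite !ltR // subnn !muln1 expn0 addn1 ltnS => h1 h2.
have hp : (0 < 2 ^ (lvl C - lvl L))%N by rewrite expn_gt0.
apply/eqP; rewrite eqn_leq leq_divRL // h2 andbT.
by rewrite -ltnS ltn_divLR // mulSnr h1.
Qed.

Lemma fin_bound d (U : set (cell d)) : finite_set U ->
  exists D, forall c, U c -> (lvl c <= D)%N.
Proof.
move=> hU; have := finite_image (@lvl d) hU.
case/finite_fsetP => X hX; exists (\max_(x <- finmap.enum_fset X) x)%N => c Uc.
have : [set lvl x | x in U] (lvl c) by exists c.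
rewrite hX /= => hin.
have hin' : lvl c \in finmap.enum_fset X by [].
by apply: (@leq_bigmax_seq _ _ xpredT id).
Qed.

Definition child0 d (L : cell d) : cell d :=
  @Cell d (lvl L).+1 (fun k => (idx L k * 2)%N).

Lemma child0P d (L : cell d) : is_child (child0 L) L.
Proof. by split => //= i; rewrite mulnK. Qed.

Definition unif d (D : nat) : set (cell d) :=
  [set c | valid_cell c /\ (lvl c <= D)%N].

Lemma unif_fin d D : finite_set (@unif d D).
Proof.
pose g := fun p : 'I_D.+1 * {ffun 'I_d -> 'I_(2 ^ D)} =>
  @Cell d p.1 (fun k => val (p.2 k)).
apply: (@sub_finite_set _ _ (g @` setT)); last first.
  by apply: finite_image; exact: finite_finset.
move=> c [hv hl].
have hl' : (lvl c < D.+1)%N by [].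
have hk : forall k, (idx c k < 2 ^ D)%N.
  move=> k; apply: (leq_trans (hv k)); by rewrite leq_exp2l.
exists (Ordinal hl', [ffun k => Ordinal (hk k)]) => //.
rewrite /g /=; case: c hv hl hl' hk => l f /= *; congr Cell.
by apply: funext => k; rewrite ffunE.
Qed.

Lemma good_exists (R : realType) d (a : 'I_d -> R) (s : R) (hs : 0 < s)
  (U B : set (cell d)) j :
  quadtree U -> B `<=` U -> exists Q, good_ext a s U B j Q.
Proof.
case=> hfin hroot hval hcl hBU.
have [D hD] := fin_bound hfin.
exists (@unif d D); split.
- split.
  + exact: unif_fin.
  + by split => // i /=; rewrite expn0.
  + by move=> c [].
  + move=> c p [hv hl] [hlc hidx]; split.
      split; last by rewrite hlc in hl; apply: ltnW.
      move=> i; rewrite -hidx ltn_divLR // -expnSr -hlc; exact: hv.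
    move=> c' [hlc' hidx']; split; last by rewrite hlc'; rewrite -hlc.
    move=> i; rewrite hlc' expnSr -ltn_divLR // hidx' -hidx ltn_divLR // -expnSr -hlc.
    exact: hv.
- by move=> c Uc; split; [exact: hval | exact: hD].
- move=> c Bc L [[hvL hlL] hleaf] _.
  have hLD : lvl L = D.
    apply/eqP; rewrite eqn_leq hlL /=; rewrite leqNgt; apply/negP => hlt.
    apply: (hleaf (child0 L) (child0P L)); split => //= i.
    rewrite expnSr ltn_mul2r /=; exact: hvL.
  have hcD := hD c (hBU c Bc).
  rewrite (@csize_eq _ _ s L D (eq_leq hLD)) (csize_eq s hcD) hLD subnn expn0.
  rewrite mulrCA ler_pM2l; last exact: tpos.
  rewrite -natrX -natrM ler_nat muln_gt0 !expn_gt0 //.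
Qed.

Lemma minext_sub (R : realType) d (a : 'I_d -> R) (s : R) (U B : set (cell d)) j :
  U `<=` min_ext a s U B j.
Proof. by move=> c Uc Q [_ hUQ _]; apply: hUQ. Qed.

Lemma minext_quad (R : realType) d (a : 'I_d -> R) (s : R) (hs : 0 < s)
  (U B : set (cell d)) j :
  quadtree U -> B `<=` U -> quadtree (min_ext a s U B j).
Proof.
move=> hU hBU; have [Q0 hQ0] := @good_exists _ _ a s hs U B j hU hBU.
have hsub : min_ext a s U B j `<=` Q0 by move=> c; apply.
case: hU => _ hroot _ _.
split.
- apply: (sub_finite_set hsub); by case: hQ0 => [[]].
- exact: minext_sub.
- by move=> c /hsub; case: hQ0 => [[_ _ hv _] _ _]; apply: hv.
- move=> c p hc hcp; split.
    move=> Q hQ; case: (hQ) => [[_ _ _ hcl] _ _]; exact: (hcl c p (hc Q hQ) hcp).1.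
  move=> c' hc'p Q hQ; case: (hQ) => [[_ _ _ hcl] _ _]; exact: (hcl c p (hc Q hQ) hcp).2 c' hc'p.
Qed.

Lemma minext_smooth (R : realType) d (a : 'I_d -> R) (s : R)
  (U B : set (cell d)) j c :
  B c -> smooth a s (min_ext a s U B j) j c.
Proof.
move=> Bc L [ML hleaf] hnb.
have : ~ min_ext a s U B j (child0 L) by apply: hleaf; exact: child0P.
move=> /existsNP [Q]; move/not_implyP => [hQ nQ].
case: (hQ) => [[_ _ _ hcl] _ hsm].
apply: (hsm c Bc) => //; split; first exact: ML.
move=> c' hc' Qc'; apply: nQ; exact: (hcl c' L Qc' hc').2 _ (child0P L).
Qed.

Lemma anc_closed d (Q : set (cell d)) (c : cell d) m :
  quadtree Q -> Q c -> (m <= lvl c)%N -> Q (anc c m).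
Proof.
case=> _ _ _ hcl Qc.
suff H : forall n m, (m + n = lvl c)%N -> Q (anc c m).
  by move=> hm; apply: (H (lvl c - m)%N); rewrite subnKC.
elim=> [|n IH] m0 hm0.
  by rewrite addn0 in hm0; rewrite hm0 anc_self.
have h1 : (m0 < lvl c)%N by rewrite -hm0 addnS ltnS leq_addr.
have h2 : (m0.+1 + n = lvl c)%N by rewrite addSnnS.
have := IH _ h2.
by move=> /hcl /(_ (anc_child h1)) [].
Qed.

Lemma step_lemma (P : nat -> Prop) n : P 0%N -> ~ P n ->
  exists k, [/\ (k < n)%N, P k & ~ P k.+1].
Proof.
move=> P0; elim: n => [|n IH] hn; first by [].
have [Pn|nPn] := pselect (P n).
  by exists n.
have [k [hk Pk nPk]] := IH nPn; exists k; split => //; exact: ltnW.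
Qed.

Lemma ext_S (R : realType) d (a : 'I_d -> R) (s : R) T1 n :
  ext a s T1 n.+1 = (min_ext a s (ext a s T1 n).1 (ext a s T1 n).2 n.+1,
                     min_ext a s (ext a s T1 n).1 (ext a s T1 n).2 n.+1 `\` (ext a s T1 n).1).
Proof. by []. Qed.

Lemma ext_inv (R : realType) d (a : 'I_d -> R) (s : R) (hs : 0 < s) T1 n :
  quadtree T1 -> quadtree (ext a s T1 n).1 /\ (ext a s T1 n).2 `<=` (ext a s T1 n).1.
Proof.
move=> hT1; elim: n => [|n [IH1 IH2]]; first by split.
rewrite ext_S /=; split; last by move=> c [].
exact: minext_quad.
Qed.

Lemma ext_mono (R : realType) d (a : 'I_d -> R) (s : R) T1 m n :
  (m <= n)%N -> (ext a s T1 m).1 `<=` (ext a s T1 n).1.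
Proof.
elim: n => [|n IH]; first by rewrite leqn0 => /eqP ->.
rewrite leq_eqVlt => /orP [/eqP -> //|hlt].
move=> c /(IH hlt) hc; rewrite ext_S /=; exact: minext_sub.
Qed.

Lemma brand_of (R : realType) d (a : 'I_d -> R) (s : R) T1 (N : cell d) m :
  (ext a s T1 m).1 N -> exists i, (1 <= i <= m.+1)%N /\ brand_set a s T1 i N.
Proof.
elim: m => [|m IH] hN; first by exists 1%N.
have [hm|hm] := pselect ((ext a s T1 m).1 N).
  have [i [/andP [h1 h2] hb]] := IH hm; exists i; split => //.
  by rewrite h1 /=; apply: (leq_trans h2).
exists m.+2; split => //.
by rewrite ltn0Sn leqnn.
Qed.

Lemma no_far (R : realType) d (a : 'I_d -> R) (s : R) (hs : 0 < s)
  (V : set (cell d)) j (C N : cell d) :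
  quadtree V -> V C -> smooth a s V j C -> valid_cell N ->
  neighbor a s C N -> 2 ^+ j * csize s C <= csize s N -> ~ V N -> False.
Proof.
move=> hV VC hsm hvN hnb hsz nVN.
have hV' := hV; case: hV' => _ hroot _ hcl.
have hcpos : forall c : cell d, 0 < csize s c.
  by move=> c; rewrite /csize divr_gt0 // exprn_gt0.
have P0 : V (anc N 0).
  suff -> : anc N 0 = root_cell d by [].
  rewrite /anc /root_cell; congr Cell; apply: funext => k.
  by rewrite subn0 divn_small.
have Pn : ~ V (anc N (lvl N)) by rewrite anc_self.
have [k [hk Pk nPk]] := @step_lemma (fun m => V (anc N m)) (lvl N) P0 Pn.
set L := anc N k.
have hleaf : leaf V L.
  split => // c' hc' Vc'; apply: nPk; exact: (hcl c' L Vc' hc').2 _ (anc_child hk).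
have hLN : csize s N < csize s L.
  have hA : (lvl L <= lvl N)%N by apply: ltnW.
  rewrite (csize_eq s (leqnn (lvl N))) (csize_eq s hA) ltr_pM2l; last exact: tpos.
  rewrite ltr_nat subnn /= -[X in (X < _)%N]/(2 ^ 0)%N ltn_exp2l // subn_gt0 //.
have hCN : csize s C <= csize s N.
  apply: le_trans hsz; apply: ler_peMl; first exact: ltW.
  by rewrite exprn_ege1 // ler1n.
have hlLC : (lvl L < lvl C)%N.
  rewrite ltnNge; apply/negP => hle.
  have : csize s L <= csize s C.
    rewrite (csize_eq s (leqnn (lvl L))) (csize_eq s hle) ler_pM2l; last exact: tpos.
    by rewrite subnn ler_nat expn_gt0.
  move: hLN hCN; lra.
have hsm' := hsm L hleaf.
suff hnbLC : neighbor a s L C.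
  move: (hsm' hnbLC) hsz hLN; lra.
have hcont : forall k', lo a s L k' <= lo a s N k' /\
    lo a s N k' + csize s N <= lo a s L k' + csize s L.
  by move=> k'; apply: F1 => //; apply: ltnW.
have hnoov : ~ (forall k', lo a s C k' < lo a s L k' + csize s L /\
                          lo a s L k' < lo a s C k' + csize s C).
  move=> hov.
  have hidx := F2 hs hlLC hov.
  have hch : is_child (anc C (lvl L).+1) L.
    have [h1 h2] := anc_child hlLC; split => // i.
    by rewrite h2 /= hidx.
  apply: (hleaf.2 _ hch); apply: anc_closed => //.
case: hnb => i [hi hk'].
exists i; split; last first.
  move=> k' hk'i; have := hk' k' hk'i; rewrite !gt_max !lt_min.
  have [h1 h2] := hcont k'; have h3 := hcpos L; have h4 := hcpos C; have h5 := hcpos N.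
  move=> /andP [/andP [g1 g2] /andP [g3 g4]].
  apply/andP; split; apply/andP; split; lra.
have hother : forall k', k' != i -> lo a s C k' < lo a s L k' + csize s L /\
                          lo a s L k' < lo a s C k' + csize s C.
  move=> k' hk'i; have := hk' k' hk'i; rewrite !gt_max !lt_min.
  have [h1 h2] := hcont k'; have h3 := hcpos L; have h4 := hcpos C; have h5 := hcpos N.
  move=> /andP [/andP [g1 g2] /andP [g3 g4]]; split; lra.
have hnoi : ~ (lo a s C i < lo a s L i + csize s L /\ lo a s L i < lo a s C i + csize s C).
  move=> hovi; apply: hnoov => k'; have [->|hne] := eqVneq k' i; first exact: hovi.
  exact: hother.
have [h1 h2] := hcont i; have h3 := hcpos L; have h4 := hcpos C; have h5 := hcpos N.
case: hi => hi.
- right; apply/eqP; rewrite eq_le; apply/andP; split; first lra.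
  rewrite leNgt; apply/negP => hlt; apply: hnoi; split; lra.
- left; apply/eqP; rewrite eq_le; apply/andP; split; last lra.
  rewrite leNgt; apply/negP => hlt; apply: hnoi; split; lra.
Qed.

Theorem lemma16 (R : realType) (d : nat) (a : 'I_d -> R) (s : R) (hs : 0 < s)
  (T1 : set (cell d)) (hT1 : quadtree T1) (j : nat) (C N : cell d) :
  (1 <= j <= d.+1)%N ->
  brand_set a s T1 j C ->
  Tstar a s T1 N ->
  neighbor a s C N ->
  2 ^+ j * csize s C <= csize s N ->
  exists i : nat, [/\ (1 <= i <= j.+1)%N, (i <= d.+1)%N & brand_set a s T1 i N].
Proof.
case: j => [|n] /andP [hj1 hjd] //.
rewrite /brand_set /= => hC hN hnb hsz.
have hN' : (ext a s T1 d).1 N by [].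
have [[_ _ hvd _] _] := ext_inv a hs d hT1.
have hvN := hvd N hN'.
have [hle|hgt] := leqP n.+1 d; last first.
  have hnd : n = d by lia.
  have [i [/andP [h1 h2] hb]] := brand_of hN'.
  exists i; split => //; first by rewrite h1 /= hnd; apply: (leq_trans h2).
have [hin|hout] := pselect ((ext a s T1 n.+1).1 N).
  have [i [/andP [h1 h2] hb]] := brand_of hin.
  exists i; split => //; first by rewrite h1.
  exact: (leq_trans h2).
exfalso.
have [hq _] := ext_inv a hs n.+1 hT1.
have [_ hBU] := ext_inv a hs n hT1.
apply: (no_far hs hq _ _ hvN hnb hsz hout).
  apply: (ext_mono (leqnSn n)); exact: hBU.
rewrite ext_S /=; exact: minext_smooth.
Qed.
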